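(* Let $d\geq 1$, let $\delta$ be a sufficiently small positive real number, let $P$ be a large positive integer, and let $1\leq q\leq P^{\delta}$, $1\leq a\leq q$ be integers with $(a,q)=1$. For $\alpha\in\mathfrak{M}(q,a)$, writing $\alpha=a/q+\beta$, we have $$F(\alpha)=q^{-2d-1}S(q,a)I(\beta)+O(P^{2d+2\delta}).$$
   Context: For an integer $d\geq 1$ define $f_d$: if $d=2k$ ($k\geq1$), $f_d(x_1,\ldots,x_d)=\prod_{i=1}^{k}(x_{2i-1}^2+x_{2i}^2)$; if $d=2k+1$ ($k\geq 0$), $f_d(x_1,\ldots,x_d)=x_1\prod_{i=1}^{k}(x_{2i}^2+x_{2i+1}^2)$. Let $f(x_1,\ldots,x_{2d+1})=f_d(x_1,\ldots,x_d)+f_d(x_{d+1},\ldots,x_{2d})-x_{2d+1}^d$. Let $e(\alpha)=e^{2\pi i\alpha}$, $B=\{1,\ldots,P\}^{2d+1}$, $F(\alpha)=\sum_{{\bf x}\in B}e(\alpha f({\bf x}))$, $\mathfrak{M}(q,a)=\{\alpha\in\mathbb{R}:|\alpha-a/q|\leq P^{\delta-d}\}$, $S(q,a)=\sum_{{\bf z}\bmod q}e\left(\frac{a}{q}f({\bf z})\right)$ (sum over ${\bf z}\in\{1,\ldots,q\}^{2d+1}$), and $I(\beta)=\int_{[0,P]^{2d+1}}e(\beta f(\xi))\,d\xi$. The implied constant in $O$ depends at most on $d$. *)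

(* Defs.v *)
From Stdlib Require Import Reals Arith.
From Coquelicot Require Import Coquelicot.
Open Scope R_scope.

(* Vectors are functions nat -> R, with coordinates x_1, ..., x_n at indices 1..n. *)
Definition upd (x : nat -> R) (k : nat) (v : R) : nat -> R :=
  fun i => if Nat.eqb i k then v else x i.

Fixpoint pairprod (x : nat -> R) (o : nat) (k : nat) : R :=
  match k with
  | O => 1
  | S j => pairprod x o j * ((x (o + 2 * k - 1)%nat) ^ 2 + (x (o + 2 * k)%nat) ^ 2)
  end.

(* f_d(x_{o+1}, ..., x_{o+d}) *)
Definition fd (d : nat) (x : nat -> R) (o : nat) : R :=
  if Nat.even d then pairprod x o (Nat.div2 d)
  else x (o + 1)%nat * pairprod x (o + 1) (Nat.div2 d).

Definition f (d : nat) (x : nat -> R) : R :=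
  fd d x 0 + fd d x d - (x (2 * d + 1)%nat) ^ d.

Definition e (t : R) : C := (cos (2 * PI * t), sin (2 * PI * t)).

Fixpoint csum1 (N : nat) (h : nat -> C) : C :=
  match N with
  | O => RtoC 0
  | S m => Cplus (csum1 m h) (h (S m))
  end.

Fixpoint boxsum (n N : nat) (g : (nat -> R) -> C) : C :=
  match n with
  | O => g (fun _ => 0)
  | S m => csum1 N (fun t => boxsum m N (fun x => g (upd x (S m) (INR t))))
  end.

Fixpoint boxint (n : nat) (P : R) (g : (nat -> R) -> R) : R :=
  match n with
  | O => g (fun _ => 0)
  | S m => RInt (fun t => boxint m P (fun x => g (upd x (S m) t))) 0 P
  end.

Definition F (d P : nat) (alpha : R) : C :=
  boxsum (2 * d + 1) P (fun x => e (alpha * f d x)).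

(* S(q,a) = sum_{z mod q} e(a/q f(z)), z in {1..q}^{2d+1} *)
Definition Sqa (d q a : nat) : C :=
  boxsum (2 * d + 1) q (fun z => e (INR a / INR q * f d z)).

Definition I (d P : nat) (beta : R) : C :=
  (boxint (2 * d + 1) (INR P) (fun xi => cos (2 * PI * (beta * f d xi))),
   boxint (2 * d + 1) (INR P) (fun xi => sin (2 * PI * (beta * f d xi)))).

(* Main.v *)
Require Import Defs.
From Stdlib Require Import Reals Arith.
From Coquelicot Require Import Coquelicot.
From Stdlib Require Import Reals Arith Lia Lra FunctionalExtensionality ZArith.
From Coquelicot Require Import Coquelicot.
Open Scope R_scope.

Lemma upd_same x k v : upd x k v k = v.
Proof. unfold upd. now rewrite Nat.eqb_refl. Qed.
Lemma upd_other x k v i : i <> k -> upd x k v i = x i.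
Proof. intro H. unfold upd. destruct (Nat.eqb_spec i k); [lia|auto]. Qed.
Lemma upd_upd_same x k v w : upd (upd x k v) k w = upd x k w.
Proof. apply functional_extensionality; intro i. unfold upd. destruct (Nat.eqb i k); auto. Qed.
Lemma upd_comm x i k a b : i <> k -> upd (upd x i a) k b = upd (upd x k b) i a.
Proof. intro H. apply functional_extensionality; intro j. unfold upd.
  destruct (Nat.eqb_spec j k), (Nat.eqb_spec j i); subst; auto; lia. Qed.

Definition Dom (P : R) (x : nat -> R) := forall i, 0 <= x i <= P.
Definition Lip (P L : R) (g : (nat -> R) -> R) := forall x i s, Dom P x -> 0 <= s <= P ->
  Rabs (g (upd x i s) - g x) <= L * Rabs (s - x i).
Definition Bnd (P M : R) (g : (nat -> R) -> R) := forall x, Dom P x -> Rabs (g x) <= M.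

Lemma Dom_upd P x k t : Dom P x -> 0 <= t <= P -> Dom P (upd x k t).
Proof. intros H Ht i. unfold upd. destruct (Nat.eqb i k); auto. Qed.

Definition clamp (P t : R) := Rmax 0 (Rmin P t).
Lemma clamp_lip P x y : 0 <= P -> Rabs (clamp P y - clamp P x) <= Rabs (y - x).
Proof. intro HP. unfold clamp, Rmax, Rmin.
  repeat destruct Rle_dec; split_Rabs; lra. Qed.
Lemma clamp_in P t : 0 <= P -> 0 <= t <= P -> clamp P t = t.
Proof. intros. unfold clamp, Rmax, Rmin. repeat destruct Rle_dec; lra. Qed.
Lemma clamp_rng P t : 0 <= P -> 0 <= clamp P t <= P.
Proof. intros. unfold clamp, Rmax, Rmin. repeat destruct Rle_dec; lra. Qed.

Lemma lip_continuous (v : R -> R) K : (forall s t, Rabs (v s - v t) <= K * Rabs (s - t)) ->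
  forall x, continuous v x.
Proof.
  intros H x. apply continuity_pt_filterlim.
  intros eps Heps. exists (eps / (Rabs K + 1)). split.
  - apply Rdiv_lt_0_compat; [lra| pose proof (Rabs_pos K); lra].
  - intros y [_ Hy]. simpl in *. unfold R_dist in *. change (dist R_met y x) with (Rabs (y - x)) in Hy. unfold dist; simpl; unfold R_dist.
    specialize (H y x).
    assert (HK: K * Rabs (y - x) <= (Rabs K + 1) * Rabs (y - x)).
    { apply Rmult_le_compat_r. apply Rabs_pos. pose proof (Rle_abs K). lra. }
    assert ((Rabs K + 1) * Rabs (y - x) < eps).
    { pose proof (Rabs_pos K).
      apply Rmult_lt_compat_l with (r := Rabs K + 1) in Hy; [|lra].
      replace ((Rabs K + 1) * (eps / (Rabs K + 1))) with eps in Hy by (field; lra). exact Hy. }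
    lra.
Qed.

Lemma lip_exRInt (u : R -> R) K P a b : 0 <= P ->
  (forall s t, 0 <= s <= P -> 0 <= t <= P -> Rabs (u s - u t) <= K * Rabs (s - t)) ->
  0 <= a -> a <= b -> b <= P -> ex_RInt u a b.
Proof.
  intros HP H Ha Hab Hb.
  set (v := fun t => u (clamp P t)).
  assert (Hv: ex_RInt v a b).
  { apply (@ex_RInt_continuous R_CompleteNormedModule). intros z _.
    apply (lip_continuous v (Rabs K)). intros s t. unfold v.
    eapply Rle_trans. apply H; apply clamp_rng; auto.
    eapply Rle_trans. apply Rmult_le_compat_r. apply Rabs_pos. apply Rle_abs.
    apply Rmult_le_compat_l. apply Rabs_pos. apply clamp_lip; auto. }
  apply (ex_RInt_ext v). 2: exact Hv.
  intros x Hx. unfold v. rewrite clamp_in; auto.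
  rewrite Rmin_left in Hx by lra. rewrite Rmax_right in Hx by lra. lra.
Qed.
Lemma Lip_upd P L g k t : 0 <= L -> 0 <= t <= P -> Lip P L g -> Lip P L (fun x => g (upd x k t)).
Proof.
  intros HL Ht H x i s Hx Hs.
  destruct (Nat.eq_dec i k) as [->|Hik].
  - rewrite upd_upd_same. rewrite Rminus_eq_0, Rabs_R0.
    apply Rmult_le_pos; auto. apply Rabs_pos.
  - rewrite upd_comm by auto.
    replace (x i) with (upd x k t i) by (apply upd_other; auto).
    apply H; auto. apply Dom_upd; auto.
Qed.

Lemma Lip_shift P L g k t t' x : Lip P L g -> Dom P x -> 0 <= t <= P -> 0 <= t' <= P ->
  Rabs (g (upd x k t) - g (upd x k t')) <= L * Rabs (t - t').
Proof.
  intros H Hx Ht Ht'.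
  rewrite <- (upd_upd_same x k t' t).
  rewrite <- (upd_same x k t') at 3.
  apply H; auto. apply Dom_upd; auto.
Qed.

Lemma RInt_R_minus (u v : R -> R) a b : ex_RInt u a b -> ex_RInt v a b ->
  RInt (fun t => u t - v t) a b = RInt u a b - RInt v a b.
Proof. intros Hu Hv. apply (RInt_minus u v a b Hu Hv). Qed.

Lemma bi_diff m : forall P L1 L2 eps g1 g2, 0 <= P -> 0 <= L1 -> 0 <= L2 ->
  Lip P L1 g1 -> Lip P L2 g2 -> (forall x, Dom P x -> Rabs (g1 x - g2 x) <= eps) ->
  Rabs (boxint m P g1 - boxint m P g2) <= P ^ m * eps.
Proof.
  induction m as [|m IH]; intros P L1 L2 eps g1 g2 HP HL1 HL2 H1 H2 He.
  - simpl. rewrite Rmult_1_l. apply He. intro i; lra.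
  - simpl.
    set (u1 := fun t => boxint m P (fun x => g1 (upd x (S m) t))).
    set (u2 := fun t => boxint m P (fun x => g2 (upd x (S m) t))).
    assert (Hu: forall g L, 0 <= L -> Lip P L g -> ex_RInt (fun t => boxint m P (fun x => g (upd x (S m) t))) 0 P).
    { intros g L HL Hg. apply (lip_exRInt _ (P ^ m * L) P); try lra.
      intros s t Hs Ht. rewrite Rmult_assoc. apply (IH P L L); auto using Lip_upd.
      intros x Hx. apply (Lip_shift P L); auto. }
    assert (E1 : ex_RInt u1 0 P) by exact (Hu g1 L1 HL1 H1).
    assert (E2 : ex_RInt u2 0 P) by exact (Hu g2 L2 HL2 H2).
    fold u1 u2.
    rewrite <- (RInt_R_minus u1 u2) by assumption.
    replace (P * P ^ m * eps) with ((P - 0) * (P ^ m * eps)) by ring.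
    apply abs_RInt_le_const; try lra.
    + apply (@ex_RInt_minus R_NormedModule u1 u2); assumption.
    + intros t Ht. unfold u1, u2. apply (IH P L1 L2); auto using Lip_upd.
      intros x Hx. apply He. apply Dom_upd; auto.
Qed.

Lemma bi_zero m P : boxint m P (fun _ => 0) = 0.
Proof.
  induction m as [|m IH]; simpl; auto.
  rewrite (RInt_ext _ (fun _ => 0)).
  - rewrite RInt_const. unfold scal; simpl; unfold mult; simpl. ring.
  - intros; apply IH.
Qed.

Lemma Lip_zero P : Lip P 0 (fun _ => 0).
Proof. intros x i s _ _. rewrite Rminus_eq_0, Rabs_R0. lra. Qed.

Lemma bi_bound m P L M g : 0 <= P -> 0 <= L -> Lip P L g -> Bnd P M g ->
  Rabs (boxint m P g) <= P ^ m * M.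
Proof.
  intros HP HL Hg HB.
  replace (boxint m P g) with (boxint m P g - boxint m P (fun _ => 0)) by (rewrite bi_zero; ring).
  apply (bi_diff m P L 0); auto; try lra. apply Lip_zero.
  intros x Hx. rewrite Rminus_0_r. auto.
Qed.

Lemma integrand_lip m P L g k s t : 0 <= P -> 0 <= L -> Lip P L g ->
  0 <= s <= P -> 0 <= t <= P ->
  Rabs (boxint m P (fun x => g (upd x k s)) - boxint m P (fun x => g (upd x k t)))
    <= P ^ m * L * Rabs (s - t).
Proof.
  intros HP HL Hg Hs Ht. rewrite Rmult_assoc. apply (bi_diff m P L L); auto using Lip_upd.
  intros x Hx. apply (Lip_shift P L); auto.
Qed.

Lemma integrand_bnd m P L M g k t : 0 <= P -> 0 <= L -> Lip P L g -> Bnd P M g ->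
  0 <= t <= P -> Rabs (boxint m P (fun x => g (upd x k t))) <= P ^ m * M.
Proof.
  intros HP HL Hg HB Ht. apply (bi_bound m P L); auto using Lip_upd.
  intros x Hx. apply HB. apply Dom_upd; auto.
Qed.

Fixpoint rs (N : nat) (u : nat -> R) : R :=
  match N with O => 0 | S m => rs m u + u (S m) end.

Fixpoint rbox (n N : nat) (g : (nat -> R) -> R) : R :=
  match n with
  | O => g (fun _ => 0)
  | S m => rs N (fun t => rbox m N (fun x => g (upd x (S m) (INR t))))
  end.

Lemma rs_ext N u v : (forall t, (1 <= t <= N)%nat -> u t = v t) -> rs N u = rs N v.
Proof. induction N; intros H; simpl; auto. rewrite IHN by (intros; apply H; lia). rewrite H by lia. auto. Qed.
Lemma rs_plus N u v : rs N (fun t => u t + v t) = rs N u + rs N v.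
Proof. induction N; simpl; [ring|rewrite IHN; ring]. Qed.
Lemma rs_minus N u v : rs N (fun t => u t - v t) = rs N u - rs N v.
Proof. induction N; simpl; [ring|rewrite IHN; ring]. Qed.
Lemma rs_scal N c u : rs N (fun t => c * u t) = c * rs N u.
Proof. induction N; simpl; [ring|rewrite IHN; ring]. Qed.
Lemma rs_bound N u M : (forall t, (1 <= t <= N)%nat -> Rabs (u t) <= M) -> Rabs (rs N u) <= INR N * M.
Proof.
  induction N; intros H. simpl. rewrite Rabs_R0; lra.
  change (rs (S N) u) with (rs N u + u (S N)).
  eapply Rle_trans. apply Rabs_triang. rewrite (S_INR N).
  assert (Rabs (rs N u) <= INR N * M) by (apply IHN; intros; apply H; lia).
  assert (Rabs (u (S N)) <= M) by (apply H; lia). lra.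
Qed.
Lemma rs_split M k u : rs (M + k) u = rs M u + rs k (fun s => u (M + s)%nat).
Proof. induction k; simpl. rewrite Nat.add_0_r; ring. rewrite Nat.add_succ_r. simpl. rewrite IHk. ring. Qed.

Lemma csum1_fst N h : fst (csum1 N h) = rs N (fun t => fst (h t)).
Proof. induction N; simpl; auto. rewrite <- IHN. reflexivity. Qed.
Lemma csum1_snd N h : snd (csum1 N h) = rs N (fun t => snd (h t)).
Proof. induction N; simpl; auto. rewrite <- IHN. reflexivity. Qed.

Lemma boxsum_fst n N g : fst (boxsum n N g) = rbox n N (fun x => fst (g x)).
Proof.
  revert g; induction n; intros g; simpl; auto.
  rewrite csum1_fst. apply rs_ext. intros. apply IHn.
Qed.
Lemma boxsum_snd n N g : snd (boxsum n N g) = rbox n N (fun x => snd (g x)).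
Proof.
  revert g; induction n; intros g; simpl; auto.
  rewrite csum1_snd. apply rs_ext. intros. apply IHn.
Qed.

Lemma rbox_plus n N g1 g2 : rbox n N (fun x => g1 x + g2 x) = rbox n N g1 + rbox n N g2.
Proof.
  revert g1 g2; induction n; intros; simpl; auto.
  rewrite <- rs_plus. apply rs_ext. intros. apply IHn.
Qed.
Lemma rbox_minus n N g1 g2 : rbox n N (fun x => g1 x - g2 x) = rbox n N g1 - rbox n N g2.
Proof.
  revert g1 g2; induction n; intros; simpl; auto.
  rewrite <- rs_minus. apply rs_ext. intros. apply IHn.
Qed.

Definition AllNat (x : nat -> R) := forall i, exists k : nat, x i = INR k.
Lemma AllNat_upd x k t : AllNat x -> AllNat (upd x k (INR t)).
Proof. intros H i. unfold upd. destruct (Nat.eqb i k); eauto. Qed.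
Lemma AllNat_0 : AllNat (fun _ => 0).
Proof. intro i. exists O. reflexivity. Qed.

Lemma rbox_ext_gen n N : forall g1 g2, (forall x, AllNat x -> g1 x = g2 x) -> rbox n N g1 = rbox n N g2.
Proof.
  induction n; intros g1 g2 H; simpl. apply H, AllNat_0.
  apply rs_ext. intros. apply IHn. intros. apply H. apply AllNat_upd; auto.
Qed.

Lemma rbox_bound n N M : forall g, (forall x, AllNat x -> Rabs (g x) <= M) -> Rabs (rbox n N g) <= INR N ^ n * M.
Proof.
  induction n; intros g H; simpl. rewrite Rmult_1_l. apply H, AllNat_0.
  rewrite Rmult_assoc. apply rs_bound. intros. apply IHn. intros. apply H. apply AllNat_upd; auto.
Qed.

Section OneD.
Variables (q Pn : nat) (C : nat -> R) (H : R -> R) (A B K : R).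
Hypothesis Hq : (1 <= q)%nat.
Hypothesis Cper : forall t, C (t + q)%nat = C t.
Hypothesis CA : forall t, Rabs (C t) <= A.
Hypothesis HB : forall t, 0 <= t <= INR Pn -> Rabs (H t) <= B.
Hypothesis HK : forall s t, 0 <= s <= INR Pn -> 0 <= t <= INR Pn -> Rabs (H s - H t) <= K * Rabs (s - t).
Hypothesis HK0 : 0 <= K.

Let Q := INR q.
Lemma Qpos : 0 < Q.
Proof. unfold Q. apply lt_0_INR. lia. Qed.

Lemma HexR a b : 0 <= a -> a <= b -> b <= INR Pn -> ex_RInt H a b.
Proof. intros. apply (lip_exRInt H K (INR Pn)); auto. apply pos_INR. Qed.

Lemma Cper_mult j s : C (j * q + s)%nat = C s.
Proof.
  induction j; simpl; auto.
  replace (q + j * q + s)%nat with ((j * q + s) + q)%nat by lia. rewrite Cper. auto.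
Qed.

Lemma block_bound a s : 0 <= a -> a + Q <= INR Pn -> (1 <= s <= q)%nat ->
  Rabs (H (a + INR s) - / Q * RInt H a (a + Q)) <= K * Q.
Proof.
  intros Ha HaQ Hs. pose proof Qpos.
  assert (HsQ : 1 <= INR s <= Q) by (unfold Q; split; [apply (le_INR 1)|apply le_INR]; lia).
  assert (E : ex_RInt H a (a + Q)) by (apply HexR; lra).
  assert (Ec : ex_RInt (fun _ => H (a + INR s)) a (a + Q)) by apply ex_RInt_const.
  replace (H (a + INR s) - / Q * RInt H a (a + Q)) with
    (/ Q * RInt (fun u => H (a + INR s) - H u) a (a + Q)).
  2:{ rewrite RInt_R_minus by auto. rewrite RInt_const. unfold scal; simpl; unfold mult; simpl. field. lra. }
  rewrite Rabs_mult, Rabs_inv, (Rabs_pos_eq Q) by lra.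
  apply (Rmult_le_reg_l Q); auto. rewrite <- Rmult_assoc, Rinv_r, Rmult_1_l by lra.
  replace (Q * (K * Q)) with ((a + Q - a) * (K * Q)) by ring.
  apply abs_RInt_le_const; try lra.
  - apply (@ex_RInt_minus R_NormedModule); auto.
  - intros t Ht. eapply Rle_trans. apply HK; lra.
    apply Rmult_le_compat_l; auto. split_Rabs; lra.
Qed.

Lemma blocks j : (j * q <= Pn)%nat ->
  Rabs (rs (j * q) (fun t => C t * H (INR t)) - / Q * rs q C * RInt H 0 (INR (j * q)))
    <= A * K * Q * INR (j * q).
Proof.
  pose proof Qpos.
  assert (A0 : 0 <= A) by (eapply Rle_trans; [apply Rabs_pos|apply (CA O)]).
  induction j; intros Hj.
  - simpl. rewrite RInt_point. unfold zero; simpl. rewrite Rmult_0_r, Rminus_0_r, Rabs_R0. lra.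
  - replace (S j * q)%nat with (j * q + q)%nat by lia.
    replace (S j * q)%nat with (j * q + q)%nat in Hj by lia.
    rewrite rs_split.
    set (a := INR (j * q)).
    assert (Ha : 0 <= a) by apply pos_INR.
    assert (HaQ : a + Q <= INR Pn) by (unfold a, Q; rewrite <- plus_INR; apply le_INR; lia).
    rewrite plus_INR. fold a Q.
    rewrite <- (RInt_Chasles H 0 a (a + Q)) by (apply HexR; lra).
    change (plus (RInt H 0 a) (RInt H a (a + Q))) with (RInt H 0 a + RInt H a (a + Q)).
    assert (IHj' := IHj ltac:(lia)). fold a in IHj'.
    set (R2 := RInt H a (a + Q)).
    assert (EB : rs q (fun s => C (j * q + s)%nat * H (INR (j * q + s))) - / Q * rs q C * R2
               = rs q (fun s => C s * (H (a + INR s) - / Q * R2))).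
    { transitivity (rs q (fun s => C s * H (a + INR s) - (/ Q * R2) * C s)).
      - rewrite rs_minus, rs_scal. f_equal.
        + apply rs_ext. intros t _. rewrite Cper_mult, plus_INR. reflexivity.
        + ring.
      - apply rs_ext. intros. ring. }
    assert (Hblk : Rabs (rs q (fun s => C s * (H (a + INR s) - / Q * R2))) <= Q * (A * (K * Q))).
    { apply rs_bound. intros t Ht. rewrite Rabs_mult. apply Rmult_le_compat; auto using Rabs_pos.
      apply block_bound; auto. }
    replace (rs (j * q) (fun t => C t * H (INR t)) + rs q (fun s => C (j * q + s)%nat * H (INR (j * q + s)))
      - / Q * rs q C * (RInt H 0 a + R2))
      with ((rs (j * q) (fun t => C t * H (INR t)) - / Q * rs q C * RInt H 0 a)
            + (rs q (fun s => C (j * q + s)%nat * H (INR (j * q + s))) - / Q * rs q C * R2)) by ring.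
    rewrite EB. eapply Rle_trans. apply Rabs_triang. nra.
Qed.

Lemma oneD : Rabs (rs Pn (fun t => C t * H (INR t)) - / Q * rs q C * RInt H 0 (INR Pn))
   <= A * (K * Q * INR Pn + 2 * B * Q).
Proof.
  pose proof Qpos.
  assert (A0 : 0 <= A) by (eapply Rle_trans; [apply Rabs_pos|apply (CA O)]).
  assert (B0 : 0 <= B) by (eapply Rle_trans; [apply Rabs_pos|apply (HB 0)]; split; [lra|apply pos_INR]).
  set (N := (Pn / q)%nat). set (r := (Pn mod q)%nat).
  assert (HP : Pn = (N * q + r)%nat) by (unfold N, r; rewrite (Nat.div_mod_eq Pn q) at 1; lia).
  assert (Hr : (r < q)%nat) by (unfold r; apply Nat.mod_upper_bound; lia).
  assert (HB1 := blocks N ltac:(lia)).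
  set (a := INR (N * q)) in *.
  assert (Ha : 0 <= a) by apply pos_INR.
  assert (HaP : a <= INR Pn) by (unfold a; apply le_INR; lia).
  assert (HPa : INR Pn - a <= Q) by (unfold a, Q; rewrite HP at 1; rewrite plus_INR;
     assert (INR r <= INR q) by (apply le_INR; lia); lra).
  rewrite <- (RInt_Chasles H 0 a (INR Pn)) by (apply HexR; lra).
  change (plus (RInt H 0 a) (RInt H a (INR Pn))) with (RInt H 0 a + RInt H a (INR Pn)).
  assert (Hs : rs Pn (fun t => C t * H (INR t)) = rs (N * q) (fun t => C t * H (INR t)) +
      rs r (fun s => C (N * q + s)%nat * H (INR (N * q + s)))) by (rewrite HP at 1; apply rs_split).
  rewrite Hs.
  assert (T1 : Rabs (rs r (fun s => C (N * q + s)%nat * H (INR (N * q + s)))) <= Q * (A * B)).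
  { eapply Rle_trans. apply rs_bound with (M := A * B).
    - intros t Ht. rewrite Rabs_mult. apply Rmult_le_compat; auto using Rabs_pos.
      apply HB. split. apply pos_INR. apply le_INR. lia.
    - apply Rmult_le_compat_r. nra. unfold Q; apply le_INR; lia. }
  assert (T2 : Rabs (/ Q * rs q C * RInt H a (INR Pn)) <= A * B * Q).
  { rewrite !Rabs_mult, Rabs_inv, (Rabs_pos_eq Q) by lra.
    assert (Rabs (rs q C) <= Q * A) by (apply rs_bound; auto).
    assert (Rabs (RInt H a (INR Pn)) <= (INR Pn - a) * B).
    { apply abs_RInt_le_const; auto. apply HexR; lra. intros; apply HB; lra. }
    assert (/ Q * Rabs (rs q C) <= A).
    { apply (Rmult_le_reg_l Q); auto. rewrite <- Rmult_assoc, Rinv_r, Rmult_1_l by lra. lra. }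
    assert (0 <= / Q * Rabs (rs q C)) by (apply Rmult_le_pos; [left; apply Rinv_0_lt_compat; lra| apply Rabs_pos]).
    assert (Rabs (RInt H a (INR Pn)) <= Q * B) by nra.
    assert (0 <= Rabs (RInt H a (INR Pn))) by apply Rabs_pos.
    nra. }
  replace (rs (N * q) (fun t => C t * H (INR t)) + rs r (fun s => C (N * q + s)%nat * H (INR (N * q + s)))
      - / Q * rs q C * (RInt H 0 a + RInt H a (INR Pn)))
    with ((rs (N * q) (fun t => C t * H (INR t)) - / Q * rs q C * RInt H 0 a)
          + rs r (fun s => C (N * q + s)%nat * H (INR (N * q + s)))
          - / Q * rs q C * RInt H a (INR Pn)) by ring.
  eapply Rle_trans. apply Rabs_triang.
  eapply Rle_trans. apply Rplus_le_compat_r. apply Rabs_triang.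
  rewrite Rabs_Ropp.
  assert (A * K * Q * a <= A * K * Q * INR Pn).
  { apply Rmult_le_compat_l; auto. apply Rmult_le_pos; [|lra]. apply Rmult_le_pos; auto. }
  nra.
Qed.
End OneD.


Definition Per (q : nat) (c : (nat -> R) -> R) :=
  forall x, AllNat x -> forall i, c (upd x i (x i + INR q)) = c x.

Lemma Per_upd q c k t : Per q c -> Per q (fun x => c (upd x k (INR t))).
Proof.
  intros H x Hx i.
  destruct (Nat.eq_dec i k) as [->|Hik].
  - rewrite !upd_upd_same. auto.
  - rewrite upd_comm by auto.
    replace (x i) with (upd x k (INR t) i) by (apply upd_other; auto).
    apply H. apply AllNat_upd; auto.
Qed.

Lemma main_claim n : forall (q Pn : nat) L c h, (1 <= q)%nat -> 0 <= L ->
  Per q c -> (forall x, AllNat x -> Rabs (c x) <= 1) ->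
  Lip (INR Pn) L h -> Bnd (INR Pn) 1 h ->
  Rabs (rbox n Pn (fun x => c x * h x) - / INR q ^ n * rbox n q c * boxint n (INR Pn) h)
   <= INR n * INR q * INR Pn ^ (n - 1) * (L * INR Pn + 2).
Proof.
  induction n as [|m IH]; intros q Pn L c h Hq HL Hc Hc1 Hh Hh1.
  - simpl. replace (c (fun _ => 0) * h (fun _ => 0) - / 1 * c (fun _ => 0) * h (fun _ => 0)) with 0 by field.
    rewrite Rabs_R0. lra.
  - assert (HP0 : 0 <= INR Pn) by apply pos_INR.
    assert (Q0 : 0 < INR q) by (apply lt_0_INR; lia).
    set (Cf := fun t : nat => rbox m q (fun x => c (upd x (S m) (INR t)))).
    set (Hf := fun t : R => boxint m (INR Pn) (fun x => h (upd x (S m) t))).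
    change (rbox (S m) Pn (fun x => c x * h x)) with
      (rs Pn (fun t => rbox m Pn (fun x => c (upd x (S m) (INR t)) * h (upd x (S m) (INR t))))).
    change (rbox (S m) q c) with (rs q Cf).
    change (boxint (S m) (INR Pn) h) with (RInt Hf 0 (INR Pn)).
    assert (H1 := oneD q Pn Cf Hf (INR q ^ m) (INR Pn ^ m) (INR Pn ^ m * L) Hq).
    assert (Cper : forall t, Cf (t + q)%nat = Cf t).
    { intro t. unfold Cf. apply rbox_ext_gen. intros x Hx.
      rewrite plus_INR.
      set (y := upd x (S m) (INR t)).
      replace (upd x (S m) (INR t + INR q)) with (upd y (S m) (y (S m) + INR q)).
      - apply Hc. apply AllNat_upd; auto.
      - unfold y. rewrite upd_upd_same, upd_same. auto. }
    assert (CA : forall t, Rabs (Cf t) <= INR q ^ m).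
    { intro t. unfold Cf. rewrite <- (Rmult_1_r (INR q ^ m)). apply rbox_bound.
      intros. apply Hc1. apply AllNat_upd; auto. }
    assert (HB : forall t, 0 <= t <= INR Pn -> Rabs (Hf t) <= INR Pn ^ m).
    { intros t Ht. unfold Hf. rewrite <- (Rmult_1_r (INR Pn ^ m)). apply (integrand_bnd m _ L); auto. }
    assert (HK : forall s t, 0 <= s <= INR Pn -> 0 <= t <= INR Pn -> Rabs (Hf s - Hf t) <= INR Pn ^ m * L * Rabs (s - t)).
    { intros s t Hs Ht. unfold Hf. apply integrand_lip; auto. }
    assert (HK0 : 0 <= INR Pn ^ m * L) by (apply Rmult_le_pos; auto; apply pow_le; auto).
    specialize (H1 Cper CA HB HK HK0).
    assert (Hsl : forall t, (1 <= t <= Pn)%nat ->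
      Rabs (rbox m Pn (fun x => c (upd x (S m) (INR t)) * h (upd x (S m) (INR t))) - / INR q ^ m * Cf t * Hf (INR t))
      <= INR m * INR q * INR Pn ^ (m - 1) * (L * INR Pn + 2)).
    { intros t Ht. unfold Cf, Hf.
      assert (Ht' : 0 <= INR t <= INR Pn) by (split; [apply pos_INR|apply le_INR; lia]).
      apply (IH q Pn L (fun x => c (upd x (S m) (INR t))) (fun x => h (upd x (S m) (INR t)))); auto.
      - apply Per_upd; auto.
      - intros. apply Hc1. apply AllNat_upd; auto.
      - apply Lip_upd; auto.
      - intros x Hx. apply Hh1. apply Dom_upd; auto. }
    assert (Hsum := rs_bound Pn _ _ Hsl). rewrite rs_minus in Hsum.
    rewrite (rs_ext Pn (fun t => / INR q ^ m * Cf t * Hf (INR t)) (fun t => / INR q ^ m * (Cf t * Hf (INR t)))) in Hsum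
       by (intros; ring).
    rewrite rs_scal in Hsum.
    replace (rs Pn (fun t => rbox m Pn (fun x => c (upd x (S m) (INR t)) * h (upd x (S m) (INR t))))
       - / INR q ^ S m * rs q Cf * RInt Hf 0 (INR Pn))
      with ((rs Pn (fun t => rbox m Pn (fun x => c (upd x (S m) (INR t)) * h (upd x (S m) (INR t))))
             - / INR q ^ m * rs Pn (fun t => Cf t * Hf (INR t)))
           + / INR q ^ m * (rs Pn (fun t => Cf t * Hf (INR t)) - / INR q * rs q Cf * RInt Hf 0 (INR Pn))).
    2:{ simpl. rewrite Rinv_mult. ring. }
    eapply Rle_trans; [apply Rabs_triang|].
    rewrite Rabs_mult, Rabs_inv, (Rabs_pos_eq (INR q ^ m)) by (apply pow_le; lra).
    assert (Qm : 0 < INR q ^ m) by (apply pow_lt; lra).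
    assert (T2 : / INR q ^ m * Rabs (rs Pn (fun t => Cf t * Hf (INR t)) - / INR q * rs q Cf * RInt Hf 0 (INR Pn))
       <= INR q * INR Pn ^ m * (L * INR Pn + 2)).
    { apply (Rmult_le_reg_l (INR q ^ m)); auto. rewrite <- Rmult_assoc, Rinv_r, Rmult_1_l by lra.
      eapply Rle_trans. exact H1. right. ring. }
    assert (EQ : INR Pn * (INR m * INR q * INR Pn ^ (m - 1) * (L * INR Pn + 2)) + INR q * INR Pn ^ m * (L * INR Pn + 2)
       = INR (S m) * INR q * INR Pn ^ (S m - 1) * (L * INR Pn + 2)).
    { destruct m. simpl. ring. replace (S (S m) - 1)%nat with (S m) by lia. replace (S m - 1)%nat with m by lia.
      rewrite (S_INR (S m)). simpl. ring. }
    lra.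
Qed.

Definition PG (g : (nat -> R) -> R) (a : nat) :=
  exists A B, 0 <= A /\ 0 <= B /\ forall P, 0 <= P -> (forall x, Dom P x -> Rabs (g x) <= A * P ^ a) /\
    (forall x i s, Dom P x -> 0 <= s <= P -> Rabs (g (upd x i s) - g x) * P <= B * P ^ a * Rabs (s - x i)).


Lemma PG_coord j : PG (fun x => x j) 1.
Proof.
  exists 1, 1. split; [lra|]. split; [lra|]. intros P HP. split.
  - intros x Hx. rewrite pow_1, Rmult_1_l, Rabs_pos_eq; apply Hx.
  - intros x i s Hx Hs. rewrite pow_1, Rmult_1_l. unfold upd. destruct (Nat.eqb_spec j i).
    + subst. lra.
    + rewrite Rminus_eq_0, Rabs_R0, Rmult_0_l. apply Rmult_le_pos; auto; apply Rabs_pos.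
Qed.

Lemma PG_const1 : PG (fun _ => 1) 0.
Proof.
  exists 1, 0. split; [lra|]. split; [lra|]. intros P HP. split.
  - intros. rewrite Rabs_R1. simpl. lra.
  - intros. rewrite Rminus_eq_0, Rabs_R0. simpl. lra.
Qed.

Lemma PG_deg g a b : PG g a -> a = b -> PG g b.
Proof. intros H ->; auto. Qed.

Lemma PG_mult g1 g2 a1 a2 : PG g1 a1 -> PG g2 a2 -> PG (fun x => g1 x * g2 x) (a1 + a2).
Proof.
  intros (A1 & B1 & HA1 & HB1 & HH1) (A2 & B2 & HA2 & HB2 & HH2).
  exists (A1 * A2), (A1 * B2 + A2 * B1). split; [apply Rmult_le_pos; auto|].
  split; [apply Rplus_le_le_0_compat; apply Rmult_le_pos; auto|].
  intros P HP. destruct (HH1 P HP) as [H1 L1], (HH2 P HP) as [H2 L2]. split.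
  - intros x Hx. rewrite Rabs_mult, pow_add.
    replace (A1 * A2 * (P ^ a1 * P ^ a2)) with ((A1 * P ^ a1) * (A2 * P ^ a2)) by ring.
    apply Rmult_le_compat; auto using Rabs_pos.
  - intros x i s Hx Hs.
    assert (Hy : Dom P (upd x i s)) by (apply Dom_upd; auto).
    set (y := upd x i s) in *.
    replace (g1 y * g2 y - g1 x * g2 x) with (g1 y * (g2 y - g2 x) + g2 x * (g1 y - g1 x)) by ring.
    assert (T1 : Rabs (g1 y * (g2 y - g2 x)) * P <= (A1 * P ^ a1) * (B2 * P ^ a2 * Rabs (s - x i))).
    { rewrite Rabs_mult, Rmult_assoc. apply Rmult_le_compat.
      apply Rabs_pos. apply Rmult_le_pos; auto using Rabs_pos. apply H1; auto. apply L2; auto. }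
    assert (T2 : Rabs (g2 x * (g1 y - g1 x)) * P <= (A2 * P ^ a2) * (B1 * P ^ a1 * Rabs (s - x i))).
    { rewrite Rabs_mult, Rmult_assoc. apply Rmult_le_compat.
      apply Rabs_pos. apply Rmult_le_pos; auto using Rabs_pos. apply H2; auto. apply L1; auto. }
    assert (T3 := Rabs_triang (g1 y * (g2 y - g2 x)) (g2 x * (g1 y - g1 x))).
    rewrite pow_add.
    apply Rmult_le_compat_r with (r := P) in T3; auto. nra.
Qed.

Lemma PG_plus g1 g2 a : PG g1 a -> PG g2 a -> PG (fun x => g1 x + g2 x) a.
Proof.
  intros (A1 & B1 & HA1 & HB1 & HH1) (A2 & B2 & HA2 & HB2 & HH2).
  exists (A1 + A2), (B1 + B2). split; [lra|]. split; [lra|].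
  intros P HP. destruct (HH1 P HP) as [H1 L1], (HH2 P HP) as [H2 L2]. split.
  - intros x Hx. eapply Rle_trans. apply Rabs_triang. specialize (H1 x Hx). specialize (H2 x Hx). nra.
  - intros x i s Hx Hs. specialize (L1 x i s Hx Hs). specialize (L2 x i s Hx Hs).
    replace (g1 (upd x i s) + g2 (upd x i s) - (g1 x + g2 x)) with
      ((g1 (upd x i s) - g1 x) + (g2 (upd x i s) - g2 x)) by ring.
    assert (T3 := Rabs_triang (g1 (upd x i s) - g1 x) (g2 (upd x i s) - g2 x)).
    apply Rmult_le_compat_r with (r := P) in T3; auto. nra.
Qed.

Lemma PG_opp g a : PG g a -> PG (fun x => - g x) a.
Proof.
  intros (A1 & B1 & HA1 & HB1 & HH1). exists A1, B1. split; auto. split; auto.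
  intros P HP. destruct (HH1 P HP) as [H1 L1]. split.
  - intros. rewrite Rabs_Ropp. auto.
  - intros. replace (- g (upd x i s) - - g x) with (- (g (upd x i s) - g x)) by ring.
    rewrite Rabs_Ropp. auto.
Qed.

Lemma PG_minus g1 g2 a : PG g1 a -> PG g2 a -> PG (fun x => g1 x - g2 x) a.
Proof. intros. apply (PG_plus g1 (fun x => - g2 x)); auto. apply PG_opp; auto. Qed.

Lemma PG_pow g a k : PG g a -> PG (fun x => g x ^ k) (a * k).
Proof.
  intro H. induction k.
  - simpl. apply PG_deg with 0%nat; [apply PG_const1|lia].
  - apply PG_deg with (a + a * k)%nat; [|lia]. simpl. apply PG_mult; auto.
Qed.

Lemma PG_ext g1 g2 a : PG g1 a -> (forall x, g1 x = g2 x) -> PG g2 a.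
Proof. intros H E. replace g2 with g1; auto. apply functional_extensionality; auto. Qed.

Lemma PG_pairprod o k : PG (fun x => pairprod x o k) (2 * k).
Proof.
  induction k.
  - simpl. apply PG_const1.
  - apply PG_deg with (2 * k + 2)%nat; [|lia].
    apply (PG_ext (fun x => pairprod x o k * (x (o + 2 * S k - 1)%nat ^ 2 + x (o + 2 * S k)%nat ^ 2))); [|reflexivity].
    apply PG_mult; auto.
    apply PG_plus; apply PG_deg with (1 * 2)%nat; auto; apply PG_pow; apply PG_coord.
Qed.

Lemma PG_fd d o : PG (fun x => fd d x o) d.
Proof.
  pose proof (Nat.div2_odd d) as Hd. rewrite <- Nat.negb_even in Hd.
  unfold fd. destruct (Nat.even d); simpl in Hd.
  - apply PG_deg with (2 * Nat.div2 d)%nat; [apply PG_pairprod|lia].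
  - apply PG_deg with (1 + 2 * Nat.div2 d)%nat; [|lia].
    apply PG_mult; [apply PG_coord|apply PG_pairprod].
Qed.

Lemma PG_f d : PG (Defs.f d) d.
Proof.
  apply (PG_ext (fun x => fd d x 0 + fd d x d - x (2 * d + 1)%nat ^ d)); [|reflexivity].
  apply PG_minus. apply PG_plus; apply PG_fd.
  apply PG_deg with (1 * d)%nat; [apply PG_pow, PG_coord|lia].
Qed.

Definition IC (q : nat) (g : (nat -> R) -> R) :=
  forall x, AllNat x -> (exists z, g x = IZR z) /\
    forall i, exists z, g (upd x i (x i + INR q)) - g x = INR q * IZR z.

Lemma AllNat_shift q x i : AllNat x -> AllNat (upd x i (x i + INR q)).
Proof.
  intros H. destruct (H i) as [k Hk]. rewrite Hk, <- plus_INR. apply AllNat_upd; auto.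
Qed.

Section ICs.
Variable q : nat.

Lemma IC_coord j : IC q (fun x => x j).
Proof.
  intros x Hx. split.
  - destruct (Hx j) as [k Hk]. exists (Z.of_nat k). rewrite Hk. apply INR_IZR_INZ.
  - intro i. unfold upd. destruct (Nat.eqb_spec j i).
    + subst. exists 1%Z. simpl. ring.
    + exists 0%Z. simpl. ring.
Qed.

Lemma IC_const1 : IC q (fun _ => 1).
Proof. intros x Hx. split. exists 1%Z; auto. intros; exists 0%Z; simpl; ring. Qed.

Lemma IC_plus g1 g2 : IC q g1 -> IC q g2 -> IC q (fun x => g1 x + g2 x).
Proof.
  intros H1 H2 x Hx. destruct (H1 x Hx) as [[a1 E1] S1], (H2 x Hx) as [[a2 E2] S2]. split.
  - exists (a1 + a2)%Z. rewrite plus_IZR. lra.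
  - intro i. destruct (S1 i) as [z1 F1], (S2 i) as [z2 F2]. exists (z1 + z2)%Z. rewrite plus_IZR. lra.
Qed.

Lemma IC_opp g : IC q g -> IC q (fun x => - g x).
Proof.
  intros H1 x Hx. destruct (H1 x Hx) as [[a1 E1] S1]. split.
  - exists (- a1)%Z. rewrite opp_IZR. lra.
  - intro i. destruct (S1 i) as [z1 F1]. exists (- z1)%Z. rewrite opp_IZR. lra.
Qed.

Lemma IC_mult g1 g2 : IC q g1 -> IC q g2 -> IC q (fun x => g1 x * g2 x).
Proof.
  intros H1 H2 x Hx. destruct (H1 x Hx) as [[a1 E1] S1], (H2 x Hx) as [[a2 E2] S2]. split.
  - exists (a1 * a2)%Z. rewrite mult_IZR. rewrite E1, E2. auto.
  - intro i. destruct (S1 i) as [z1 F1], (S2 i) as [z2 F2].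
    destruct (H1 _ (AllNat_shift q x i Hx)) as [[b1 G1] _].
    exists (b1 * z2 + a2 * z1)%Z. rewrite plus_IZR, !mult_IZR.
    set (y := upd x i (x i + INR q)) in *.
    replace (g1 y * g2 y - g1 x * g2 x) with (g1 y * (g2 y - g2 x) + g2 x * (g1 y - g1 x)) by ring.
    rewrite F1, F2, G1, E2. ring.
Qed.

Lemma IC_pow g k : IC q g -> IC q (fun x => g x ^ k).
Proof.
  intro H. induction k. apply IC_const1. apply (IC_mult g (fun x => g x ^ k)); auto.
Qed.

Lemma IC_ext g1 g2 : IC q g1 -> (forall x, g1 x = g2 x) -> IC q g2.
Proof. intros H E. replace g2 with g1; auto. apply functional_extensionality; auto. Qed.

Lemma IC_pairprod o k : IC q (fun x => pairprod x o k).
Proof.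
  induction k. apply IC_const1.
  apply (IC_ext (fun x => pairprod x o k * (x (o + 2 * S k - 1)%nat ^ 2 + x (o + 2 * S k)%nat ^ 2))); [|reflexivity].
  apply IC_mult; auto. apply IC_plus; apply IC_pow, IC_coord.
Qed.

Lemma IC_f d : IC q (Defs.f d).
Proof.
  apply (IC_ext (fun x => fd d x 0 + fd d x d + - (x (2 * d + 1)%nat ^ d))); [|intros; unfold Defs.f; ring].
  apply IC_plus; [apply IC_plus|apply IC_opp, IC_pow, IC_coord];
  unfold fd; destruct (Nat.even d); try apply IC_pairprod; apply IC_mult; [apply IC_coord|apply IC_pairprod|apply IC_coord|apply IC_pairprod].
Qed.
End ICs.

Lemma cos_periodZ x k : cos (x + 2 * IZR k * PI) = cos x.
Proof.
  destruct (Z_le_gt_dec 0 k).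
  - rewrite <- (Z2Nat.id k) by lia. rewrite <- INR_IZR_INZ. apply cos_period.
  - replace k with (- Z.of_nat (Z.to_nat (- k)))%Z by lia.
    rewrite opp_IZR, <- INR_IZR_INZ.
    rewrite <- (cos_period (x + 2 * - INR (Z.to_nat (- k)) * PI) (Z.to_nat (-k))). f_equal. ring.
Qed.
Lemma sin_periodZ x k : sin (x + 2 * IZR k * PI) = sin x.
Proof.
  destruct (Z_le_gt_dec 0 k).
  - rewrite <- (Z2Nat.id k) by lia. rewrite <- INR_IZR_INZ. apply sin_period.
  - replace k with (- Z.of_nat (Z.to_nat (- k)))%Z by lia.
    rewrite opp_IZR, <- INR_IZR_INZ.
    rewrite <- (sin_period (x + 2 * - INR (Z.to_nat (- k)) * PI) (Z.to_nat (-k))). f_equal. ring.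
Qed.

Lemma cos_lip u v : Rabs (cos u - cos v) <= Rabs (u - v).
Proof.
  destruct (MVT_abs cos (fun c => - sin c) v u) as [c [Hc _]].
  - intros. apply derivable_pt_lim_cos.
  - rewrite Hc, Rabs_Ropp. rewrite <- (Rmult_1_l (Rabs (u - v))) at 2.
    apply Rmult_le_compat_r. apply Rabs_pos. apply Rabs_le. apply SIN_bound.
Qed.
Lemma sin_lip u v : Rabs (sin u - sin v) <= Rabs (u - v).
Proof.
  destruct (MVT_abs sin cos v u) as [c [Hc _]].
  - intros. apply derivable_pt_lim_sin.
  - rewrite Hc. rewrite <- (Rmult_1_l (Rabs (u - v))) at 2.
    apply Rmult_le_compat_r. apply Rabs_pos. apply Rabs_le. apply COS_bound.
Qed.

Lemma Lip_trig (T : R -> R) PP beta B d :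
  (forall u v, Rabs (T u - T v) <= Rabs (u - v)) -> 0 < PP ->
  (forall x i s, Dom PP x -> 0 <= s <= PP -> Rabs (Defs.f d (upd x i s) - Defs.f d x) * PP <= B * PP ^ d * Rabs (s - x i)) ->
  Lip PP (2 * PI * Rabs beta * (B * PP ^ d / PP)) (fun x => T (2 * PI * (beta * Defs.f d x))).
Proof.
  intros HT HP Hf x i s Hx Hs.
  eapply Rle_trans; [apply HT|].
  replace (2 * PI * (beta * Defs.f d (upd x i s)) - 2 * PI * (beta * Defs.f d x)) with
    ((2 * PI * beta) * (Defs.f d (upd x i s) - Defs.f d x)) by ring.
  rewrite Rabs_mult.
  replace (Rabs (2 * PI * beta)) with (2 * PI * Rabs beta).
  2:{ rewrite Rabs_mult, (Rabs_pos_eq (2 * PI)); auto. pose proof PI_RGT_0; lra. }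
  rewrite (Rmult_assoc (2 * PI * Rabs beta)).
  apply Rmult_le_compat_l. pose proof PI_RGT_0. pose proof (Rabs_pos beta). nra.
  specialize (Hf x i s Hx Hs).
  apply (Rmult_le_reg_r PP); auto.
  replace (B * PP ^ d / PP * Rabs (s - x i) * PP) with (B * PP ^ d * Rabs (s - x i)) by (field; lra). auto.
Qed.

Lemma Per_trig (T : R -> R) q a d :
  (forall u k, T (u + 2 * IZR k * PI) = T u) -> (1 <= q)%nat ->
  Per q (fun x => T (2 * PI * (INR a / INR q * Defs.f d x))).
Proof.
  intros HT Hq x Hx i.
  destruct (IC_f q d x Hx) as [_ Hs]. destruct (Hs i) as [z Hz].
  assert (Q0 : INR q <> 0) by (apply not_0_INR; lia).
  replace (2 * PI * (INR a / INR q * Defs.f d (upd x i (x i + INR q)))) with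
    (2 * PI * (INR a / INR q * Defs.f d x) + 2 * IZR (Z.of_nat a * z) * PI).
  - apply HT.
  - rewrite mult_IZR, <- INR_IZR_INZ.
    replace (Defs.f d (upd x i (x i + INR q))) with (Defs.f d x + INR q * IZR z) by lra.
    field. auto.
Qed.

Theorem lemma3p1 :
  forall d : nat, (1 <= d)%nat ->
  exists delta0 : R, 0 < delta0 /\
  exists Cst : R, 0 < Cst /\
  forall delta : R, 0 < delta <= delta0 ->
  exists P0 : nat, forall P : nat, (P0 <= P)%nat ->
  forall q a : nat,
    (1 <= q)%nat -> INR q <= Rpower (INR P) delta ->
    (1 <= a <= q)%nat -> Nat.gcd a q = 1%nat ->
  forall alpha : R,
    Rabs (alpha - INR a / INR q) <= Rpower (INR P) (delta - INR d) ->
    Cmod (Cminus (F d P alpha)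
            (Cmult (RtoC (/ (INR q ^ (2 * d + 1))))
                   (Cmult (Sqa d q a) (I d P (alpha - INR a / INR q)))))
      <= Cst * Rpower (INR P) (2 * INR d + 2 * delta).
Proof.
  intros d Hd.
  destruct (PG_f d) as (A & B & HA & HB & HPf).
  exists 1. split; [lra|].
  pose proof PI_RGT_0 as HPI.
  assert (Hn : 0 < INR (2 * d + 1)) by (apply lt_0_INR; lia).
  exists (4 * INR (2 * d + 1) * (2 * PI * B + 2)). split.
  { apply Rmult_lt_0_compat. lra. nra. }
  intros delta [Hd0 Hd1]. exists 1%nat. intros P HP1 q a Hq Hqle Ha _ alpha Hal.
  set (n := (2 * d + 1)%nat) in *.
  set (beta := alpha - INR a / INR q) in *.
  set (PP := INR P) in *.
  assert (HPP : 1 <= PP) by (unfold PP; apply (le_INR 1); lia).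
  destruct (HPf PP ltac:(lra)) as [_ Hfl].
  set (L := 2 * PI * Rabs beta * (B * PP ^ d / PP)).
  assert (HL : 0 <= L).
  { unfold L. apply Rmult_le_pos. pose proof (Rabs_pos beta). nra.
    apply Rmult_le_pos. apply Rmult_le_pos; auto. apply pow_le; lra. left; apply Rinv_0_lt_compat; lra. }
  set (c1 := fun x => cos (2 * PI * (INR a / INR q * Defs.f d x))).
  set (c2 := fun x => sin (2 * PI * (INR a / INR q * Defs.f d x))).
  set (h1 := fun x => cos (2 * PI * (beta * Defs.f d x))).
  set (h2 := fun x => sin (2 * PI * (beta * Defs.f d x))).
  assert (Lh1 : Lip PP L h1) by (apply Lip_trig; auto; [apply cos_lip|lra]).
  assert (Lh2 : Lip PP L h2) by (apply Lip_trig; auto; [apply sin_lip|lra]).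
  assert (Bh1 : Bnd PP 1 h1) by (intros x _; apply Rabs_le, COS_bound).
  assert (Bh2 : Bnd PP 1 h2) by (intros x _; apply Rabs_le, SIN_bound).
  assert (Pc1 : Per q c1) by (apply Per_trig; auto; apply cos_periodZ).
  assert (Pc2 : Per q c2) by (apply Per_trig; auto; apply sin_periodZ).
  assert (Bc1 : forall x, AllNat x -> Rabs (c1 x) <= 1) by (intros x _; apply Rabs_le, COS_bound).
  assert (Bc2 : forall x, AllNat x -> Rabs (c2 x) <= 1) by (intros x _; apply Rabs_le, SIN_bound).
  set (E := INR n * INR q * PP ^ (n - 1) * (L * PP + 2)).
  assert (M11 := main_claim n q P L c1 h1 Hq HL Pc1 Bc1 Lh1 Bh1). fold PP E in M11.
  assert (M22 := main_claim n q P L c2 h2 Hq HL Pc2 Bc2 Lh2 Bh2). fold PP E in M22.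
  assert (M21 := main_claim n q P L c2 h1 Hq HL Pc2 Bc2 Lh1 Bh1). fold PP E in M21.
  assert (M12 := main_claim n q P L c1 h2 Hq HL Pc1 Bc1 Lh2 Bh2). fold PP E in M12.
  assert (EF1 : fst (F d P alpha) = rbox n P (fun x => c1 x * h1 x) - rbox n P (fun x => c2 x * h2 x)).
  { unfold F. rewrite boxsum_fst. fold n. rewrite <- rbox_minus. apply rbox_ext_gen. intros x _.
    unfold e, c1, c2, h1, h2; simpl. rewrite <- cos_plus. f_equal. unfold beta. ring. }
  assert (EF2 : snd (F d P alpha) = rbox n P (fun x => c2 x * h1 x) + rbox n P (fun x => c1 x * h2 x)).
  { unfold F. rewrite boxsum_snd. fold n. rewrite <- rbox_plus. apply rbox_ext_gen. intros x _.
    unfold e, c1, c2, h1, h2; simpl. replace (2 * PI * (alpha * Defs.f d x)) with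
      (2 * PI * (INR a / INR q * Defs.f d x) + 2 * PI * (beta * Defs.f d x)) by (unfold beta; ring).
    rewrite sin_plus. ring. }
  assert (ES1 : fst (Sqa d q a) = rbox n q c1) by (unfold Sqa; rewrite boxsum_fst; reflexivity).
  assert (ES2 : snd (Sqa d q a) = rbox n q c2) by (unfold Sqa; rewrite boxsum_snd; reflexivity).
  assert (EI : I d P beta = (boxint n PP h1, boxint n PP h2)) by reflexivity.
  rewrite EI.
  destruct (F d P alpha) as [F1 F2] eqn:EF. destruct (Sqa d q a) as [S1 S2] eqn:ES.
  simpl in EF1, EF2, ES1, ES2. fold n.
  set (X := Cminus (F1, F2) (Cmult (RtoC (/ INR q ^ n)) (Cmult (S1, S2) (boxint n PP h1, boxint n PP h2)))).
  assert (X1 : Rabs (fst X) <= 2 * E).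
  { unfold X. simpl. rewrite EF1, ES1, ES2.
    replace (rbox n P (fun x => c1 x * h1 x) - rbox n P (fun x => c2 x * h2 x) +
      - (/ INR q ^ n * (rbox n q c1 * boxint n PP h1 - rbox n q c2 * boxint n PP h2) -
         0 * (rbox n q c1 * boxint n PP h2 + rbox n q c2 * boxint n PP h1)))
     with ((rbox n P (fun x => c1 x * h1 x) - / INR q ^ n * rbox n q c1 * boxint n PP h1)
          - (rbox n P (fun x => c2 x * h2 x) - / INR q ^ n * rbox n q c2 * boxint n PP h2)) by ring.
    eapply Rle_trans. apply Rabs_triang. rewrite Rabs_Ropp. lra. }
  assert (X2 : Rabs (snd X) <= 2 * E).
  { unfold X. simpl. rewrite EF2, ES1, ES2.
    replace (rbox n P (fun x => c2 x * h1 x) + rbox n P (fun x => c1 x * h2 x) +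
      - (/ INR q ^ n * (rbox n q c1 * boxint n PP h2 + rbox n q c2 * boxint n PP h1) +
         0 * (rbox n q c1 * boxint n PP h1 - rbox n q c2 * boxint n PP h2)))
     with ((rbox n P (fun x => c2 x * h1 x) - / INR q ^ n * rbox n q c2 * boxint n PP h1)
          + (rbox n P (fun x => c1 x * h2 x) - / INR q ^ n * rbox n q c1 * boxint n PP h2)) by ring.
    eapply Rle_trans. apply Rabs_triang. lra. }
  assert (HX : Cmod X <= 4 * E).
  { eapply Rle_trans. apply Cmod_2Rmax.
    assert (Rmax (Rabs (fst X)) (Rabs (snd X)) <= 2 * E) by (apply Rmax_lub; auto).
    assert (S2pos : 0 <= sqrt 2) by apply sqrt_pos.
    assert (S2sq : sqrt 2 * sqrt 2 = 2) by (apply sqrt_sqrt; lra).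
    assert (sqrt 2 <= 2) by nra.
    assert (0 <= Rmax (Rabs (fst X)) (Rabs (snd X))) by (eapply Rle_trans; [apply Rabs_pos|apply Rmax_l]).
    nra. }
  fold X. eapply Rle_trans. exact HX.
  assert (HPP0 : 0 < PP) by lra.
  set (Rd := Rpower PP delta).
  assert (Rd1 : 1 <= Rd) by (unfold Rd; rewrite <- (Rpower_O PP) by lra; apply Rle_Rpower; lra).
  assert (LP : L * PP <= 2 * PI * B * Rd).
  { unfold L. replace (2 * PI * Rabs beta * (B * PP ^ d / PP) * PP) with (2 * PI * B * (Rabs beta * PP ^ d)) by (field; lra).
    apply Rmult_le_compat_l. nra.
    replace Rd with (Rpower PP (delta - INR d) * PP ^ d).
    - apply Rmult_le_compat_r. apply pow_le; lra. auto.
    - unfold Rd. rewrite <- Rpower_pow by lra. rewrite <- Rpower_plus. f_equal. ring. }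
  assert (Epow : PP ^ (n - 1) = Rpower PP (2 * INR d)).
  { replace (n - 1)%nat with (2 * d)%nat by (unfold n; lia). rewrite <- Rpower_pow by lra. rewrite mult_INR. reflexivity. }
  assert (Ftot : Rpower PP (2 * INR d + 2 * delta) = Rpower PP (2 * INR d) * Rd * Rd).
  { unfold Rd. rewrite Rmult_assoc, <- Rpower_plus, <- Rpower_plus. f_equal. ring. }
  rewrite Ftot. unfold E. rewrite Epow.
  assert (W : 0 < Rpower PP (2 * INR d)) by (unfold Rpower; apply exp_pos).
  assert (Q1 : 0 <= INR q) by apply pos_INR.
  assert (T1 : L * PP + 2 <= (2 * PI * B + 2) * Rd) by nra.
  assert (T2 : INR q * (L * PP + 2) <= Rd * ((2 * PI * B + 2) * Rd)).
  { apply Rmult_le_compat; auto. nra. }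
  replace (4 * (INR n * INR q * Rpower PP (2 * INR d) * (L * PP + 2))) with
    ((4 * INR n * Rpower PP (2 * INR d)) * (INR q * (L * PP + 2))) by ring.
  replace (4 * INR n * (2 * PI * B + 2) * (Rpower PP (2 * INR d) * Rd * Rd)) with
    ((4 * INR n * Rpower PP (2 * INR d)) * (Rd * ((2 * PI * B + 2) * Rd))) by ring.
  apply Rmult_le_compat_l; auto. nra.
Qed.
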